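(* Let $(E,\tau)$ be a locally solid vector lattice. Then $\tau$ is locally solidly submetrisable if and only if $C_\tau=E$.
   Context: All vector lattices are real and Archimedean; linear topologies are Hausdorff. A locally solid topology on a vector lattice is a linear topology such that zero has a neighbourhood basis of solid sets. A locally solid topology on a vector lattice $G$ is solidly submetrisable if it is finer than some metrisable locally solid topology on $G$. $\tau$ is locally solidly submetrisable if for every $x\in E$ the restriction $\tau|_{B_x}$ to the band $B_x$ generated by $x$ is solidly submetrisable. A sequence $(V_n)_{n\geq1}$ of $\tau$-neighbourhoods of zero is normal if $V_{n+1}+V_{n+1}\subseteq V_n$ for all $n$. The carrier of $\tau$ is $C_\tau=\bigcup\{N^{\mathrm d}: N=\bigcap_{n\geq1}V_n \text{ for some normal sequence }(V_n)\text{ of solid }\tau\text{-neighbourhoods of zero}\}$, where $N^{\mathrm d}$ is the disjoint complement of $N$ in $E$. *)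

(* Defs.v *)
From HB Require Import structures.
From mathcomp Require Import all_boot all_order all_algebra.
From mathcomp Require Import all_classical all_reals.
Set Implicit Arguments. Unset Strict Implicit. Unset Printing Implicit Defensive.
Import Order.TTheory GRing.Theory Num.Theory.
Local Open Scope classical_set_scope.
Local Open Scope ring_scope.

Section VectorLattice.
Variables (R : realType) (E : lmodType R) (le : E -> E -> Prop).

Definition is_sup2 (x y s : E) : Prop :=
  le x s /\ le y s /\ forall u, le x u -> le y u -> le s u.
Definition is_inf2 (x y s : E) : Prop :=
  le s x /\ le s y /\ forall u, le u x -> le u y -> le u s.

Definition is_vector_lattice : Prop :=
  (forall x, le x x) /\
  (forall x y, le x y -> le y x -> x = y) /\
  (forall x y z, le x y -> le y z -> le x z) /\
  (forall x y z, le x y -> le (x + z) (y + z)) /\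
  (forall (a : R) x y, 0 <= a -> le x y -> le (a *: x) (a *: y)) /\
  (forall x y, exists s, is_sup2 x y s).

Definition is_archimedean : Prop :=
  forall x y : E, (forall n : nat, le (n%:R *: x) y) -> le x 0.

Definition vjoin (x y : E) : E := xget x [set s | is_sup2 x y s].
Definition vmeet (x y : E) : E := xget x [set s | is_inf2 x y s].
Definition vabs (x : E) : E := vjoin x (- x).

Definition solid_in (G S : set E) : Prop :=
  S `<=` G /\ forall x y, S y -> G x -> le (vabs x) (vabs y) -> S x.

Definition is_ideal (B : set E) : Prop :=
  [/\ B 0, (forall x y, B x -> B y -> B (x + y)),
      (forall (a : R) x, B x -> B (a *: x)) & solid_in setT B].

Definition is_supset (D : set E) (s : E) : Prop :=
  (forall d, D d -> le d s) /\ (forall u, (forall d, D d -> le d u) -> le s u).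

Definition is_band (B : set E) : Prop :=
  is_ideal B /\ forall D s, D `<=` B -> is_supset D s -> B s.

Definition band_gen (x : E) : set E :=
  [set y | forall B, is_band B -> B x -> B y].

Definition disj_compl (N : set E) : set E :=
  [set x | forall y, N y -> vmeet (vabs x) (vabs y) = 0].

Definition is_topology_on (G : set E) (T : set (set E)) : Prop :=
  [/\ (forall U, T U -> U `<=` G), T G,
      (forall F : set (set E), F `<=` T -> T (\bigcup_(U in F) U)) &
      (forall U V, T U -> T V -> T (U `&` V))].

(* Hausdorff linear topology on the vector subspace G *)
Definition linear_topology_on (G : set E) (T : set (set E)) : Prop :=
  [/\ is_topology_on G T,
      (forall x y U, G x -> G y -> T U -> U (x + y) ->
         exists V W, [/\ T V, T W, V x, W y &
           forall v w, V v -> W w -> U (v + w)]),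
      (forall (a : R) x U, G x -> T U -> U (a *: x) ->
         exists e : R, exists V, [/\ 0 < e, T V, V x &
           forall (b : R) v, `|b - a| < e -> V v -> U (b *: v)]) &
      (forall x y, G x -> G y -> x <> y ->
         exists U V, [/\ T U, T V, U x, V y & U `&` V = set0])].

Definition nbhd0 (T : set (set E)) (U : set E) : Prop :=
  exists V, [/\ T V, V 0 & V `<=` U].

Definition locally_solid_on (G : set E) (T : set (set E)) : Prop :=
  linear_topology_on G T /\
  forall U, nbhd0 T U -> exists V, [/\ nbhd0 T V, solid_in G V & V `<=` U].

Definition is_metric_on (G : set E) (d : E -> E -> R) : Prop :=
  [/\ (forall x y, G x -> G y -> 0 <= d x y),
      (forall x y, G x -> G y -> (d x y = 0 <-> x = y)),
      (forall x y, G x -> G y -> d x y = d y x) &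
      (forall x y z, G x -> G y -> G z -> d x z <= d x y + d y z)].

Definition metrisable_on (G : set E) (T : set (set E)) : Prop :=
  exists d : E -> E -> R, is_metric_on G d /\
    forall U, T U <-> (U `<=` G /\
      forall x, U x -> exists r : R, 0 < r /\
        forall y, G y -> d x y < r -> U y).

Definition finer (T T' : set (set E)) : Prop := T' `<=` T.

Definition solidly_submetrisable_on (G : set E) (T : set (set E)) : Prop :=
  exists T', [/\ locally_solid_on G T', metrisable_on G T' & finer T T'].

Definition restrict_top (B : set E) (T : set (set E)) : set (set E) :=
  [set V | exists U, T U /\ V = U `&` B].

Definition locally_solidly_submetrisable (T : set (set E)) : Prop :=
  forall x : E, solidly_submetrisable_on (band_gen x) (restrict_top (band_gen x) T).

Definition normal_seq (T : set (set E)) (V : nat -> set E) : Prop :=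
  (forall n, nbhd0 T (V n)) /\
  (forall n a b, V n.+1 a -> V n.+1 b -> V n (a + b)).

Definition carrier (T : set (set E)) : set E :=
  [set x | exists V : nat -> set E,
     [/\ normal_seq T V, (forall n, solid_in setT (V n)) &
         disj_compl (\bigcap_n V n) x]].

End VectorLattice.

(* Main.v *)
Require Import Defs.
From HB Require Import structures.
From mathcomp Require Import all_boot all_order all_algebra.
From mathcomp Require Import all_classical all_reals.
From mathcomp Require Import ring lra zify.
Set Implicit Arguments. Unset Strict Implicit. Unset Printing Implicit Defensive.
Import Order.TTheory GRing.Theory Num.Theory.
Local Open Scope classical_set_scope.
Local Open Scope ring_scope.


Section Lat.
Variables (R : realType) (E : lmodType R) (le : E -> E -> Prop).
Hypothesis hVL : is_vector_lattice le.

Lemma lrefl x : le x x. Proof. by case: hVL => h _; apply: h. Qed.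
Lemma lanti x y : le x y -> le y x -> x = y. Proof. by case: hVL => _ [h _]; apply: h. Qed.
Lemma ltr x y z : le x y -> le y z -> le x z. Proof. by case: hVL => _ [_ [h _]]; apply: h. Qed.
Lemma laddr x y z : le x y -> le (x + z) (y + z). Proof. by case: hVL => _ [_ [_ [h _]]]; apply: h. Qed.
Lemma lscale (a : R) x y : 0 <= a -> le x y -> le (a *: x) (a *: y).
Proof. by case: hVL => _ [_ [_ [_ [h _]]]]; apply: h. Qed.
Lemma lsup x y : exists s, is_sup2 le x y s. Proof. by case: hVL => _ [_ [_ [_ [_ h]]]]; apply: h. Qed.

Lemma laddl x y z : le x y -> le (z + x) (z + y).
Proof. by move=> h; rewrite ![z + _]addrC; apply: laddr. Qed.
Lemma ladd2 a b c d : le a b -> le c d -> le (a + c) (b + d).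
Proof. by move=> h1 h2; apply: (ltr (laddr c h1)); apply: laddl. Qed.
Lemma laddr_rev x y z : le (x + z) (y + z) -> le x y.
Proof. by move=> /(laddr (- z)); rewrite !addrK. Qed.
Lemma lopp x y : le x y -> le (- y) (- x).
Proof.
move=> /(laddr (- x - y)).
have -> : x + (- x - y) = - y by rewrite addrA subrr add0r.
by have -> : y + (- x - y) = - x by rewrite addrC -addrA addNr addr0.
Qed.
Lemma lsub0 x y : le x y -> le 0 (y - x).
Proof. by move=> /(laddr (- x)); rewrite subrr. Qed.
Lemma lsub0_rev x y : le 0 (y - x) -> le x y.
Proof. by move=> /(laddr x); rewrite add0r subrK. Qed.
Lemma lmove1 x y z : le (x + z) y -> le x (y - z).
Proof. by move=> /(laddr (- z)); rewrite addrK. Qed.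
Lemma lmove2 x y z : le x (y - z) -> le (x + z) y.
Proof. by move=> /(laddr z); rewrite subrK. Qed.

Lemma joinP x y : is_sup2 le x y (vjoin le x y).
Proof. by rewrite /vjoin; apply: xgetPex; apply: lsup. Qed.
Lemma join_l x y : le x (vjoin le x y). Proof. by case: (joinP x y). Qed.
Lemma join_r x y : le y (vjoin le x y). Proof. by case: (joinP x y) => _ []. Qed.
Lemma join_lub x y u : le x u -> le y u -> le (vjoin le x y) u.
Proof. by case: (joinP x y) => _ [_]; apply. Qed.

Lemma infex x y : exists s, is_inf2 le x y s.
Proof.
exists (- vjoin le (- x) (- y)); split; [|split].
- by rewrite -[x]opprK; apply: lopp; rewrite opprK; apply: join_l.
- by rewrite -[y]opprK; apply: lopp; rewrite opprK; apply: join_r.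
- move=> u h1 h2; rewrite -[u]opprK; apply: lopp; apply: join_lub; exact: lopp.
Qed.
Lemma meetP x y : is_inf2 le x y (vmeet le x y).
Proof. by rewrite /vmeet; apply: xgetPex; apply: infex. Qed.
Lemma meet_l x y : le (vmeet le x y) x. Proof. by case: (meetP x y). Qed.
Lemma meet_r x y : le (vmeet le x y) y. Proof. by case: (meetP x y) => _ []. Qed.
Lemma meet_glb x y u : le u x -> le u y -> le u (vmeet le x y).
Proof. by case: (meetP x y) => _ [_]; apply. Qed.

Lemma abs_l x : le x (vabs le x). Proof. exact: join_l. Qed.
Lemma abs_r x : le (- x) (vabs le x). Proof. exact: join_r. Qed.
Lemma abs_lub x u : le x u -> le (- x) u -> le (vabs le x) u.
Proof. exact: join_lub. Qed.

Lemma half2 (v : E) : (2^-1 : R) *: (v + v) = v.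
Proof. by rewrite -mulr2n -scaler_nat scalerA mulVf ?scale1r // pnatr_eq0. Qed.

Lemma abs_ge0 x : le 0 (vabs le x).
Proof.
have h : le 0 (vabs le x + vabs le x).
  by rewrite -(subrr x); apply: ladd2; [apply: abs_l | apply: abs_r].
have := lscale (a := 2^-1) (ltW _) h; rewrite scaler0 half2; apply.
by rewrite invr_gt0 ltr0n.
Qed.

Lemma abs_opp x : le (vabs le (- x)) (vabs le x).
Proof. by apply: abs_lub; [apply: abs_r | rewrite opprK; apply: abs_l]. Qed.

Lemma abs_le_nonneg z : le 0 z -> le (vabs le z) z.
Proof.
move=> h; apply: abs_lub; first exact: lrefl.
by apply: (ltr _ h); rewrite -oppr0; apply: lopp.
Qed.

Lemma abs_eq0 z : le (vabs le z) 0 -> z = 0.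
Proof.
move=> h; apply: lanti; first by apply: (ltr _ h); apply: abs_l.
by rewrite -[z]opprK -oppr0; apply: lopp; apply: (ltr _ h); apply: abs_r.
Qed.

Lemma abs_add x y : le (vabs le (x + y)) (vabs le x + vabs le y).
Proof.
apply: abs_lub; first by apply: ladd2; apply: abs_l.
by rewrite opprD; apply: ladd2; apply: abs_r.
Qed.

Lemma abs_scale (c : R) x : le (vabs le (c *: x)) (`|c| *: vabs le x).
Proof.
have hs : forall u, 0 <= c -> le u (vabs le x) -> le (c *: u) (`|c| *: vabs le x).
  by move=> u hc hu; rewrite ger0_norm //; apply: lscale.
have hn : forall u, c <= 0 -> le (- u) (vabs le x) -> le (c *: u) (`|c| *: vabs le x).
  move=> u hc hu; rewrite ler0_norm //.
  have -> : c *: u = (- c) *: (- u) by rewrite scaleNr scalerN opprK.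
  by apply: lscale; rewrite ?oppr_ge0.
case: (lerP 0 c) => hc; apply: abs_lub.
- by apply: hs => //; apply: abs_l.
- by rewrite -scalerN; apply: hs => //; apply: abs_r.
- by apply: hn; [apply: ltW | apply: abs_r].
- by rewrite -scalerN; apply: hn; [apply: ltW | rewrite opprK; apply: abs_l].
Qed.

Lemma scale_le_nat (c : R) (m : nat) v : le 0 v -> `|c| <= m%:R ->
  le (`|c| *: v) (v *+ m).
Proof.
move=> hv hc; rewrite -scaler_nat; apply: lsub0_rev; rewrite -scalerBl.
by rewrite -(scaler0 _ (m%:R - `|c|)); apply: lscale => //; rewrite subr_ge0.
Qed.

Lemma scale_le1 (c : R) v : le 0 v -> `|c| <= 1 -> le (`|c| *: v) v.
Proof. by move=> hv hc; have := scale_le_nat hv (m := 1) hc; rewrite mulr1n. Qed.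

Lemma abs_balanced (c : R) x : `|c| <= 1 -> le (vabs le (c *: x)) (vabs le x).
Proof. by move=> hc; apply: ltr (abs_scale c x) _; apply: scale_le1 => //; apply: abs_ge0. Qed.

Lemma meet_ge0 a b : le 0 a -> le 0 b -> le 0 (vmeet le a b).
Proof. exact: meet_glb. Qed.

Lemma meet_eq0 u w : le 0 u -> le 0 w -> le (vmeet le u w) 0 -> vmeet le u w = 0.
Proof. by move=> hu hw h; apply: lanti => //; apply: meet_ge0. Qed.

Lemma ident1 a b : le (a + b - vjoin le a b) (vmeet le a b).
Proof.
apply: meet_glb.
- apply: lsub0_rev; have -> : a - (a + b - vjoin le a b) = vjoin le a b - b.
    by rewrite !opprD opprK !addrA subrr add0r addrC.
  by apply: lsub0; apply: join_r.
- apply: lsub0_rev; have -> : b - (a + b - vjoin le a b) = vjoin le a b - a.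
    by rewrite [a + b]addrC !opprD opprK !addrA subrr add0r addrC.
  by apply: lsub0; apply: join_l.
Qed.

Lemma ident2 a b : le (vmeet le a b) (a + b - vjoin le a b).
Proof.
apply: lmove1; rewrite addrC; apply: lmove2; apply: join_lub.
- by apply: lmove1; apply: laddl; apply: meet_r.
- by apply: lmove1; rewrite [a + b]addrC; apply: laddl; apply: meet_l.
Qed.

Lemma meet_mono u v w : le u v -> le (vmeet le u w) (vmeet le v w).
Proof. move=> h; apply: meet_glb; [apply: (ltr _ h); apply: meet_l | apply: meet_r]. Qed.

Lemma orth_mono u v w : le 0 u -> le 0 w -> le u v -> vmeet le v w = 0 -> vmeet le u w = 0.
Proof. by move=> hu hw huv hv; apply: meet_eq0 => //; rewrite -hv; apply: meet_mono. Qed.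

Lemma ladd0 u v : le 0 u -> le 0 v -> le 0 (u + v).
Proof. by move=> hu hv; rewrite -[0]addr0; apply: ladd2. Qed.

Lemma orth_add u v w : le 0 u -> le 0 v -> le 0 w ->
  vmeet le u w = 0 -> vmeet le v w = 0 -> vmeet le (u + v) w = 0.
Proof.
move=> hu hv hw h1 h2; apply: meet_eq0 => //; first exact: ladd0.
set t := vmeet le (u + v) w.
have ht1 : le (t - v) u.
  by apply: lsub0_rev; rewrite opprB addrA; apply: lsub0; apply: meet_l.
have ht2 : le (t - v) w.
  apply: (ltr _ (meet_r (u + v) w)); apply: lsub0_rev.
  by rewrite opprB addrC subrK.
have ht3 : le t v.
  have := meet_glb ht1 ht2; rewrite h1 => /(laddr v); rewrite subrK add0r; apply.
by rewrite -h2; apply: meet_glb => //; apply: meet_r.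
Qed.

Lemma nneg_nat u m : le 0 u -> le 0 (u *+ m).
Proof. by move=> hu; elim: m => [|m ih]; [rewrite mulr0n; apply: lrefl | rewrite mulrS; apply: ladd0]. Qed.

Lemma orth_nat u w m : le 0 u -> le 0 w -> vmeet le u w = 0 -> vmeet le (u *+ m) w = 0.
Proof.
move=> hu hw h; elim: m => [|m ih].
  by rewrite mulr0n; apply: meet_eq0 => //; [apply: lrefl | apply: meet_l].
by rewrite mulrS; apply: orth_add => //; apply: nneg_nat.
Qed.

Lemma orth_sup (D : set E) s w d0 : D d0 -> le 0 w ->
  (forall d, D d -> le 0 d /\ vmeet le d w = 0) -> is_supset le D s ->
  vmeet le s w = 0.
Proof.
move=> Dd0 hw hD [hub hlub].
have hs0 : le 0 s by apply: (ltr (proj1 (hD _ Dd0))); apply: hub.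
apply: meet_eq0 => //.
have h1 : le s (vjoin le s w - w).
  apply: hlub => d Dd; apply: lmove1.
  have [hd0 hdw] := hD d Dd.
  have : le (d + w - vjoin le d w) 0 by rewrite -hdw; apply: ident1.
  move=> /(laddr (vjoin le d w)); rewrite subrK add0r => h.
  apply: (ltr h); apply: join_lub.
  - by apply: (ltr (hub _ Dd)); apply: join_l.
  - by apply: join_r.
apply: (ltr (ident2 s w)).
by have := lmove2 h1 => /(laddr (- vjoin le s w)); rewrite subrr.
Qed.

Lemma natbound (c : R) : exists m : nat, `|c| <= m%:R.
Proof. by exists (Num.bound `|c|); apply: ltW; apply: archi_boundP. Qed.

Lemma abs0_orth w : le 0 w -> vmeet le (vabs le 0) w = 0.
Proof.
move=> hw; apply: (orth_mono (abs_ge0 0) hw (abs_le_nonneg (lrefl 0))).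
by apply: meet_eq0 (lrefl 0) hw _; apply: meet_l.
Qed.

Lemma dc_band (N : set E) : is_band le (disj_compl le N).
Proof.
have hw : forall y, le 0 (vabs le y) by move=> y; apply: abs_ge0.
have hsolid : forall x x', disj_compl le N x' -> le (vabs le x) (vabs le x') ->
    disj_compl le N x.
  by move=> x x' hx' hle y Ny; apply: orth_mono (abs_ge0 _) (hw y) hle (hx' y Ny).
split; first split.
- by move=> y _; apply: abs0_orth.
- move=> x x' hx hx' y Ny.
  apply: orth_mono (abs_ge0 _) (hw y) (abs_add x x') _.
  by apply: orth_add => //; [apply: hx | apply: hx'].
- move=> a x hx; have [m hm] := natbound a.
  apply: (hsolid _ ((vabs le x) *+ m)) => [y Ny|].
    apply: orth_mono (abs_ge0 _) (hw y) (abs_le_nonneg (nneg_nat m (hw x))) _.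
    by apply: orth_nat => //; apply: hx.
  apply: (ltr (abs_scale a x)); apply: (ltr (scale_le_nat (hw x) hm)).
  by apply: (ltr _ (abs_l _)); apply: lrefl.
- by split => // x x' hx' _ hle; apply: hsolid hx' hle.
- move=> D s hD [hub hlub] y Ny.
  have [[d0 Dd0]|D0] := pselect (exists d, D d); last first.
    have hs : forall u, le s u by move=> u; apply: hlub => d Dd; exfalso; apply: D0; exists d.
    have s0 : s = 0.
      apply: lanti; first exact: hs.
      have := hs (s + s) => /(laddr (- s)); rewrite subrr addrK; apply.
    by rewrite s0; apply: abs0_orth.
  set sp := vjoin le s 0; set sm := vjoin le (- s) 0.
  have hsp : vmeet le sp (vabs le y) = 0.
    apply: (orth_sup (D := [set vjoin le d 0 | d in D]) (d0 := vjoin le d0 0)) => //.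
    - by exists d0.
    - move=> _ [d Dd <-]; split; first exact: join_r.
      apply: orth_mono (join_r _ _) (hw y) _ (hD _ Dd y Ny).
      by apply: join_lub; [apply: abs_l | apply: abs_ge0].
    - split.
      + move=> _ [d Dd <-]; apply: join_lub; last exact: join_r.
        by apply: (ltr (hub _ Dd)); apply: join_l.
      + move=> u hu; apply: join_lub.
          apply: hlub => d Dd; apply: (ltr _ (hu _ (ex_intro2 _ _ d Dd erefl))).
          exact: join_l.
        by apply: (ltr _ (hu _ (ex_intro2 _ _ d0 Dd0 erefl))); apply: join_r.
  have hsm : vmeet le sm (vabs le y) = 0.
    apply: orth_mono (join_r _ _) (hw y) _ (hD _ Dd0 y Ny).
    apply: join_lub; last exact: abs_ge0.
    by apply: (ltr (lopp (hub _ Dd0))); apply: abs_r.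
  apply: orth_mono (abs_ge0 _) (hw y) _ (orth_add (join_r _ _) (join_r _ _) (hw y) hsp hsm).
  apply: abs_lub.
  - have := ladd2 (join_l s 0) (join_r (- s) 0); rewrite addr0; apply.
  - have := ladd2 (join_r s 0) (join_l (- s) 0); rewrite add0r; apply.
Qed.

End Lat.


Section Comb.
Variables (R : realType) (E : lmodType R) (W : nat -> set E).
Hypothesis hW0 : forall z, W 0 z.
Hypothesis hWadd : forall n a b, W n.+1 a -> W n.+1 b -> W n (a + b).
Hypothesis hWz : forall n, W n 0.

Lemma Wmono1 n z : W n.+1 z -> W n z.
Proof. by move=> h; rewrite -[z]addr0; apply: hWadd. Qed.
Lemma Wmono n m z : (n <= m)%N -> W m z -> W n z.
Proof.
move=> /subnK <-; elim: (m - n)%N z => [|d ih] z; first by rewrite add0n.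
by rewrite addSn => /Wmono1; apply: ih.
Qed.

Fixpoint Sset (l : seq nat) : set E :=
  if l is k :: l' then (fun z => exists a b, [/\ W k a, Sset l' b & z = a + b])
  else (fun z => z = 0).

Lemma Sset_cat l1 l2 z : Sset (l1 ++ l2) z <->
  exists a b, [/\ Sset l1 a, Sset l2 b & z = a + b].
Proof.
elim: l1 z => [|k l1 ih] z /=.
  by split=> [h|[a [b [-> h ->]]]]; [exists 0, z; split; rewrite ?add0r | rewrite add0r].
split.
  move=> [a [b [ha /ih [c [d [hc hd ->]]] ->]]].
  by exists (a + c), d; split => //; [exists a, c | rewrite addrA].
move=> [a [b [[c [d [hc hd ->]]] hb ->]]].
exists c, (d + b); split => //; last by rewrite addrA.
by apply/ih; exists d, b.
Qed.

Lemma Sset_perm l1 l2 z : perm_eq l1 l2 -> Sset l1 z -> Sset l2 z.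
Proof.
move=> hp; apply: (catCA_perm_ind (P := fun l => Sset l z)) hp.
move=> s1 s2 s3 /Sset_cat [a [b [ha /Sset_cat [c [d [hc hd ->]]] ->]]].
apply/Sset_cat; exists c, (a + d); split => //; first by apply/Sset_cat; exists a, d.
by rewrite !addrA [a + c]addrC.
Qed.

Definition wt (M : nat) (l : seq nat) : nat := \sum_(k <- l) 2 ^ (M - k).
Definition mu (l : seq nat) : nat := \sum_(k <- l) 2 ^ k.

Lemma exmax (l : seq nat) : l != [::] -> exists K, K \in l /\ all (fun k => k <= K)%N l.
Proof.
elim: l => [//|x l ih] _.
case: (altP (l =P [::])) => [->|/ih [K [hK hall]]].
  by exists x; rewrite mem_head /= leqnn.
exists (maxn x K); split.
  by rewrite /maxn; case: ifP => _; rewrite ?mem_head // in_cons hK orbT.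
rewrite /= leq_maxl /=; apply/allP => k hk; have := allP hall k hk.
by move=> h; apply: leq_trans h (leq_maxr _ _).
Qed.

Lemma wt_cons M k l : wt M (k :: l) = (2 ^ (M - k) + wt M l)%N.
Proof. by rewrite /wt big_cons. Qed.
Lemma mu_cons k l : mu (k :: l) = (2 ^ k + mu l)%N.
Proof. by rewrite /mu big_cons. Qed.

Lemma key b : forall l n M, (mu l < b)%N -> all (fun k => k <= M)%N l -> (n <= M)%N ->
  (wt M l <= 2 ^ (M - n))%N -> Sset l `<=` W n.
Proof.
elim: b => [//|b ih] l n M hmu hall hn hwt z.
case: l hmu hall hwt => [|k1 [|k2 r]] hmu hall hwt.
- by move=> /= ->; apply: hWz.
- move=> /= [a [c [ha -> ->]]]; rewrite addr0; apply: Wmono ha.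
  move: hwt; rewrite wt_cons /wt big_nil addn0 leq_exp2l // => h.
  move: hall => /= /andP [hk _]; lia.
set l := [:: k1, k2 & r].
have [K [hKl hK]] : exists K, K \in l /\ all (fun k => k <= K)%N l by apply: exmax.
have hallM k : k \in l -> (k <= M)%N := allP hall k.
have hallK k : k \in l -> (k <= K)%N := allP hK k.
have hKM : (K <= M)%N := hallM K hKl.
have hK0 : (0 < K)%N.
  case: K hK hallK {hKM hKl} => [|K] // hK hallK.
  have h1 := hallK k1 (mem_head _ _).
  have h2 : (k2 <= 0)%N by apply: hallK; rewrite !in_cons eqxx orbT.
  move: hwt; rewrite !wt_cons.
  have -> : (M - k1 = M)%N by lia.
  have -> : (M - k2 = M)%N by lia.
  have : (2 ^ (M - n) <= 2 ^ M)%N by rewrite leq_exp2l //; lia.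
  have : (0 < 2 ^ M)%N by rewrite expn_gt0.
  lia.
have hp1 := perm_to_rem hKl.
have hwtl r0 (hp : perm_eq l r0) : wt M l = wt M r0 by rewrite /wt (perm_big _ hp).
have hmul r0 (hp : perm_eq l r0) : mu l = mu r0 by rewrite /mu (perm_big _ hp).
have hexK : (2 ^ K.-1 < 2 ^ K)%N by rewrite ltn_exp2l //; lia.
case: (boolP (K \in rem K l)) => hK2.
- set rr := rem K (rem K l).
  have hp : perm_eq l [:: K, K & rr].
    by apply: (perm_trans hp1); rewrite perm_cons; apply: perm_to_rem.
  move=> /(Sset_perm hp) [a [c [ha [a' [d [ha' hd ->]]] ->]]].
  rewrite addrA.
  have hallr : all (fun k => k <= M)%N [:: K, K & rr] by rewrite -(perm_all _ hp).
  have m1 : (mu (K.-1 :: rr) < b)%N.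
    by move: hmu; rewrite (hmul _ hp) !mu_cons; lia.
  have a1 : all (fun k => k <= M)%N (K.-1 :: rr).
    by move: hallr => /= /and3P [_ _ ->]; rewrite andbT; lia.
  have w1 : (wt M (K.-1 :: rr) <= 2 ^ (M - n))%N.
    move: hwt; rewrite (hwtl _ hp) !wt_cons.
    have -> : (M - K.-1 = (M - K).+1)%N by lia.
    by rewrite expnS; lia.
  apply: (ih (K.-1 :: rr) n M m1 a1 hn w1).
  by exists (a + a'), d; split => //; apply: hWadd; rewrite prednK.
- set rr := rem K l.
  have hp : perm_eq l (K :: rr) := hp1.
  have hallr : all (fun k => k <= M)%N (K :: rr) by rewrite -(perm_all _ hp).
  have hrlt k : k \in rr -> (k < K)%N.
    move=> hk; have hkl : k \in l by apply: (mem_rem hk).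
    rewrite ltn_neqAle hallK // andbT; apply/eqP => ekK.
    have : K \in rr by rewrite -ekK.
    by rewrite /rr (negbTE hK2).
  have hrne : rr <> [::].
    move=> r0; have := perm_size hp; rewrite -/rr r0 /=; done.
  move=> /(Sset_perm hp) [a [d [ha hd ->]]].
  have hwt2 := hwt; move: hwt2; rewrite (hwtl _ hp) wt_cons => hwt2.
  set q := (2 ^ (M - K))%N in hwt2.
  have hq : (0 < q)%N by rewrite expn_gt0.
  have hdiv : (q * 2 %| wt M rr)%N.
    rewrite /wt big_seq; apply: dvdn_sum => k hk.
    rewrite /q -expnSr; apply: dvdn_exp2l.
    have := hrlt k hk; lia.
  have hpos : (0 < wt M rr)%N.
    by case: (rr) hrne => [//|k0 rr''] _; rewrite wt_cons; rewrite addn_gt0 expn_gt0.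
  have hnK : (n < K)%N.
    have : (q < 2 ^ (M - n))%N by lia.
    rewrite /q ltn_exp2l //; lia.
  have hdiv2 : (q * 2 %| 2 ^ (M - n))%N.
    by rewrite /q -expnSr; apply: dvdn_exp2l; lia.
  move: hdiv hdiv2 => /dvdnP [x hx] /dvdnP [y hy].
  have m1 : (mu (K.-1 :: rr) < b)%N.
    by move: hmu; rewrite (hmul _ hp) !mu_cons; lia.
  have a1 : all (fun k => k <= M)%N (K.-1 :: rr).
    by move: hallr => /= /andP [_ ->]; rewrite andbT; lia.
  have w1 : (wt M (K.-1 :: rr) <= 2 ^ (M - n))%N.
    rewrite wt_cons.
    have -> : (M - K.-1 = (M - K).+1)%N by lia.
    rewrite expnSr -/q hx hy.
    move: hwt2; rewrite hx hy => h.
    have h2 : (q * (2 * x + 1) <= q * (2 * y))%N by nia.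
    rewrite leq_pmul2l // in h2.
    have h3 : (2 * x + 2 <= 2 * y)%N by lia.
    nia.
  apply: (ih (K.-1 :: rr) n M m1 a1 hn w1).
  by exists a, d; split => //; apply: Wmono1; rewrite prednK.
Qed.
End Comb.



Lemma pow_small (R : realType) (e : R) : 0 < e -> exists n : nat, (2^-1 : R) ^+ n < e.
Proof.
move=> he; exists (Num.bound (e^-1)).+1.
set m := (Num.bound (e^-1)).+1.
have h1 : e^-1 < m%:R.
  apply: (lt_le_trans (archi_boundP _)); first by rewrite invr_ge0 ltW.
  by rewrite ler_nat.
have h2 : (m%:R : R) < (2 ^ m)%:R by rewrite ltr_nat ltn_expl.
rewrite exprVn natrX in h2 *.
rewrite invf_plt ?posrE //; last by rewrite exprn_gt0.
by apply: (lt_trans h1).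
Qed.

Section Rho.
Variables (R : realType) (E : lmodType R) (W : nat -> set E).
Hypothesis hW0 : forall z, W 0 z.
Hypothesis hWadd : forall n a b, W n.+1 a -> W n.+1 b -> W n (a + b).
Hypothesis hWz : forall n, W n 0.
Hypothesis hWbal : forall n (c : R) z, `|c| <= 1 -> W n z -> W n (c *: z).

Definition cost (l : seq nat) : R := \sum_(k <- l) (2^-1 : R) ^+ k.
Definition rho (z : E) : R := inf [set c | exists l, Sset W l z /\ c = cost l].

Lemma cost_ge0 l : 0 <= cost l.
Proof. by rewrite /cost; apply: sumr_ge0 => k _; apply: exprn_ge0; rewrite invr_ge0. Qed.

Lemma rho_ne z : nonempty [set c | exists l, Sset W l z /\ c = cost l].
Proof. by exists (cost [:: 0%N]), [:: 0%N]; split => //; exists z, 0; split; rewrite ?addr0. Qed.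

Lemma rho_lb z : has_lbound [set c | exists l, Sset W l z /\ c = cost l].
Proof. by exists 0 => _ [l [_ ->]]; apply: cost_ge0. Qed.

Lemma rho_le l z : Sset W l z -> rho z <= cost l.
Proof. by move=> h; apply: ge_inf; [apply: rho_lb | exists l]. Qed.

Lemma rho_ge0 z : 0 <= rho z.
Proof. by apply: lb_le_inf; [apply: rho_ne | move=> _ [l [_ ->]]; apply: cost_ge0]. Qed.

Lemma rho0 : rho 0 = 0.
Proof.
apply/eqP; rewrite eq_le rho_ge0 andbT.
by have := rho_le (l := [::]) (z := 0) erefl; rewrite /cost big_nil; apply.
Qed.

Lemma rho_W n z : W n z -> rho z <= (2^-1) ^+ n.
Proof.
move=> h; have := rho_le (l := [:: n]) (z := z).
rewrite /cost big_cons big_nil addr0; apply.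
by exists z, 0; split; rewrite ?addr0.
Qed.

Lemma pow2_nat (k M : nat) : (k <= M)%N ->
  ((2 ^ (M - k))%N%:R : R) = (2^-1) ^+ k * 2 ^+ M.
Proof.
move=> hk; rewrite natrX -{2}(subnK hk) exprD exprVn mulrA.
by rewrite [_^-1 * _]mulrC mulfVK // expf_neq0 // pnatr_eq0.
Qed.

Lemma all_le_sum (l : seq nat) : all (fun k => k <= \sum_(i <- l) i)%N l.
Proof.
elim: l => [//|k l ih] /=; rewrite big_cons leq_addr /=.
by apply/allP => x hx; apply: leq_trans (allP ih x hx) (leq_addl _ _).
Qed.

Lemma wt_real M l : all (fun k => k <= M)%N l -> ((wt M l)%:R : R) = cost l * 2 ^+ M.
Proof.
move=> hall; rewrite /wt /cost natr_sum mulr_suml big_seq [RHS]big_seq.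
by apply: eq_bigr => k hk; apply: pow2_nat; apply: (allP hall).
Qed.

Lemma rho_lt n z : rho z < (2^-1) ^+ n -> W n z.
Proof.
move=> h.
have hpos : 0 < (2^-1) ^+ n - rho z by rewrite subr_gt0.
have [_ [l [hl ->]] hc] := inf_adherent hpos (conj (rho_ne z) (rho_lb z)).
rewrite addrC subrK in hc.
set M := (n + \sum_(i <- l) i)%N.
have hall : all (fun k => k <= M)%N l.
  by apply/allP => k hk; apply: leq_trans (allP (all_le_sum l) k hk) (leq_addl _ _).
have hnM : (n <= M)%N by apply: leq_addr.
have hwt : (wt M l <= 2 ^ (M - n))%N.
  apply: ltnW; rewrite -(ltr_nat R) wt_real // pow2_nat //.
  by rewrite ltr_pM2r // exprn_gt0.
exact: (key hWadd hWz (ltnSn (mu l)) hall hnM hwt hl).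
Qed.

Lemma rho_add a b : rho (a + b) <= rho a + rho b.
Proof.
have h1 : forall l2, Sset W l2 b -> rho (a + b) - cost l2 <= rho a.
  move=> l2 hl2; apply: lb_le_inf; first exact: rho_ne.
  move=> _ [l1 [hl1 ->]]; rewrite lerBlDr.
  have -> : cost l1 + cost l2 = cost (l1 ++ l2) by rewrite /cost big_cat.
  by apply: rho_le; apply/Sset_cat; exists a, b.
have h2 : rho (a + b) - rho a <= rho b.
  apply: lb_le_inf; first exact: rho_ne.
  by move=> _ [l2 [hl2 ->]]; rewrite lerBlDr [cost l2 + _]addrC -lerBlDr; apply: h1.
by rewrite -lerBlDl.
Qed.

Lemma Sset_scale c l z : `|c| <= 1 -> Sset W l z -> Sset W l (c *: z).
Proof.
move=> hc; elim: l z => [|k l ih] z /=; first by move=> ->; rewrite scaler0.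
move=> [a [b [ha hb ->]]]; exists (c *: a), (c *: b); split.
- exact: hWbal.
- exact: ih.
- by rewrite scalerDr.
Qed.

Lemma rho_scale c z : `|c| <= 1 -> rho (c *: z) <= rho z.
Proof.
move=> hc; apply: lb_le_inf; first exact: rho_ne.
by move=> _ [l [hl ->]]; apply: rho_le; apply: Sset_scale.
Qed.

Lemma rho_opp z : rho (- z) = rho z.
Proof.
have h : forall u, rho (- u) <= rho u.
  by move=> u; rewrite -scaleN1r; apply: rho_scale; rewrite normrN normr1.
by apply/eqP; rewrite eq_le h /= -{1}[z]opprK h.
Qed.

Lemma rho_nat z m : rho (z *+ m) <= m%:R * rho z.
Proof.
elim: m => [|m ih]; first by rewrite mulr0n rho0 mul0r.
rewrite mulrS -add1n natrD mulrDl mul1r.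
by apply: (le_trans (rho_add _ _)); apply: lerD.
Qed.

Lemma rho_big c z (m : nat) : (0 < m)%N -> `|c| <= m%:R -> rho (c *: z) <= m%:R * rho z.
Proof.
move=> hm hc.
have hm' : (m%:R : R) != 0 by rewrite pnatr_eq0 -lt0n.
have -> : c *: z = ((c / m%:R) *: z) *+ m.
  by rewrite -scaler_nat scalerA mulrCA mulfV // mulr1.
apply: (le_trans (rho_nat _ _)); rewrite ler_pM2l ?ltr0n //.
apply: rho_scale; rewrite normrM normfV normr_nat ler_pdivrMr ?ltr0n //.
by rewrite mul1r.
Qed.

End Rho.



Lemma pow_dec (R : realType) n : (2^-1 : R) ^+ n.+1 <= (2^-1) ^+ n.
Proof.
rewrite exprS ler_piMl ?exprn_ge0 ?invr_ge0 //.
by rewrite invf_le1 // ler1n.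
Qed.

Lemma pow_pos (R : realType) n : 0 < (2^-1 : R) ^+ n.
Proof. by rewrite exprn_gt0 // invr_gt0. Qed.

Section Back.
Variables (R : realType) (E : lmodType R) (le : E -> E -> Prop).
Hypothesis hVL : is_vector_lattice le.
Variable tau : set (set E).
Hypothesis htau : locally_solid_on le setT tau.
Variable V : nat -> set E.
Hypothesis hnorm : normal_seq tau V.
Hypothesis hsolid : forall n, solid_in le setT (V n).
Variable x : E.
Hypothesis hdc : disj_compl le (\bigcap_n V n) x.

Let B := band_gen le x.
Let W n := if n is n'.+1 then V n' else setT.

Lemma B0 : B 0. Proof. by move=> B' [[h0 _ _ _] _] _. Qed.
Lemma Badd y z : B y -> B z -> B (y + z).
Proof. by move=> hy hz B' hb hx; case: (hb) => [[_ h _ _] _]; apply: h; [apply: hy | apply: hz]. Qed.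
Lemma Bscale (c : R) y : B y -> B (c *: y).
Proof. by move=> hy B' hb hx; case: (hb) => [[_ _ h _] _]; apply: h; apply: hy. Qed.
Lemma Bsub y z : B y -> B z -> B (y - z).
Proof. by move=> hy hz; apply: Badd => //; rewrite -scaleN1r; apply: Bscale. Qed.

Lemma BN y : B y -> (forall n, V n y) -> y = 0.
Proof.
move=> hy hV.
have hd : disj_compl le (\bigcap_n V n) y.
  by apply: hy; [apply: dc_band | ].
have := hd y (fun n _ => hV n) => h.
apply: (abs_eq0 hVL); rewrite -h; apply: (meet_glb hVL); exact: (lrefl hVL).
Qed.

Lemma V0 n : V n 0.
Proof. by case: (proj1 hnorm n) => O [_ h0 hs]; apply: hs. Qed.

Lemma hW0 z : W 0 z. Proof. by []. Qed.
Lemma hWadd n a b : W n.+1 a -> W n.+1 b -> W n (a + b).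
Proof. by case: n => [//|n] /=; apply: (proj2 hnorm). Qed.
Lemma hWz n : W n 0. Proof. by case: n => [//|n]; apply: V0. Qed.
Lemma hWbal n (c : R) z : `|c| <= 1 -> W n z -> W n (c *: z).
Proof.
case: n => [//|n] /= hc hz; case: (hsolid n) => _ h.
by apply: h hz _ _ => //; apply: abs_balanced.
Qed.

Let rh := rho W.
Let d (a b : E) := rh (a - b).

Lemma rhV n z : V n z -> rh z <= (2^-1) ^+ n.+1.
Proof. by move=> h; apply: (rho_W (W := W)); exact: h. Qed.
Lemma rhlt n z : rh z < (2^-1) ^+ n.+1 -> V n z.
Proof. by move=> h; have := rho_lt hW0 hWadd hWz h. Qed.

Lemma d_tri a b c : d a c <= d a b + d b c.
Proof. by rewrite /d; have := rho_add hW0 (a - b) (b - c); rewrite addrA subrK. Qed.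
Lemma d_sym a b : d a b = d b a.
Proof. by rewrite /d -opprB; apply: rho_opp; [apply: hW0 | apply: hWbal]. Qed.
Lemma d_ge0 a b : 0 <= d a b. Proof. exact: rho_ge0 hW0 _. Qed.
Lemma d_refl a : d a a = 0. Proof. by rewrite /d subrr; apply: rho0 hW0. Qed.
Lemma d_eq0 a b : B a -> B b -> d a b = 0 -> a = b.
Proof.
move=> ha hb h; apply/eqP; rewrite -subr_eq0; apply/eqP; apply: BN.
  exact: Bsub.
have h' : rh (a - b) = 0 := h.
by move=> n; apply: rhlt; rewrite h'; apply: pow_pos.
Qed.

Let T' : set (set E) := [set U | U `<=` B /\ forall a, U a ->
  exists r, 0 < r /\ forall y, B y -> d a y < r -> U y].
Let ball a r := [set y | B y /\ d a y < r].

Lemma ball_open a r : T' (ball a r).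
Proof.
split; first by move=> y [].
move=> y [hy hr]; exists (r - d a y); split; first by rewrite subr_gt0.
move=> z hz hlt; split => //.
by apply: (le_lt_trans (d_tri a y z)); rewrite -ltrBrDl.
Qed.

Lemma ball_center a r : B a -> 0 < r -> ball a r a.
Proof. by move=> ha hr; split => //; rewrite d_refl. Qed.

Lemma exists_pow (r : R) : 0 < r -> exists n, (2^-1 : R) ^+ n < r.
Proof. exact: pow_small. Qed.

Lemma topo : is_topology_on B T'.
Proof.
split.
- by move=> U [].
- by split => // a _; exists 1; split => //.
- move=> F hF; split.
    by move=> y [U FU Uy]; case: (hF U FU) => h _; apply: h.
  move=> a [U FU Ua]; case: (hF U FU) => _ /(_ a Ua) [r [hr h]].
  by exists r; split => // y hy hd; exists U => //; apply: h.
- move=> U U' [hU1 hU2] [hU1' hU2']; split; first by move=> y [h _]; apply: hU1.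
  move=> a [ha ha']; have [r [hr h]] := hU2 a ha; have [r' [hr' h']] := hU2' a ha'.
  exists (Num.min r r'); split; first by rewrite lt_min hr hr'.
  move=> y hy; rewrite lt_min => /andP [h1 h2]; split; [exact: h | exact: h'].
Qed.

Lemma hausd a b : B a -> B b -> a <> b ->
  exists U V', [/\ T' U, T' V', U a, V' b & U `&` V' = set0].
Proof.
move=> ha hb hab.
have hpos : 0 < d a b.
  rewrite lt_neqAle d_ge0 andbT eq_sym; apply/negP => /eqP h0.
  exact: hab (d_eq0 ha hb h0).
exists (ball a (d a b / 2)), (ball b (d a b / 2)); split.
- exact: ball_open.
- exact: ball_open.
- by apply: ball_center => //; rewrite divr_gt0.
- by apply: ball_center => //; rewrite divr_gt0.
apply/seteqP; split => // z [[_ h1] [_ h2]].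
have := d_tri a z b; rewrite [d z b]d_sym; lra.
Qed.

Lemma cont_add a b U : B a -> B b -> T' U -> U (a + b) ->
  exists V1 V2, [/\ T' V1, T' V2, V1 a, V2 b & forall v w, V1 v -> V2 w -> U (v + w)].
Proof.
move=> ha hb [hUB hU] hUab; have [r [hr h]] := hU _ hUab.
exists (ball a (r / 2)), (ball b (r / 2)); split.
- exact: ball_open.
- exact: ball_open.
- by apply: ball_center => //; rewrite divr_gt0.
- by apply: ball_center => //; rewrite divr_gt0.
move=> v w [hv hdv] [hw hdw]; apply: h; first exact: Badd.
have -> : d (a + b) (v + w) = rh ((a - v) + (b - w)).
  by rewrite /d opprD addrACA.
have := rho_add hW0 (a - v) (b - w); rewrite -/rh.
have : rh (a - v) = d a v by []. have : rh (b - w) = d b w by [].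
lra.
Qed.

Lemma cont_scal (a : R) y U : B y -> T' U -> U (a *: y) ->
  exists e V1, [/\ 0 < e, T' V1, V1 y &
    forall (b : R) v, `|b - a| < e -> V1 v -> U (b *: v)].
Proof.
move=> hy [hUB hU] hUa; have [r [hr h]] := hU _ hUa.
have hr2 : 0 < r / 2 by rewrite divr_gt0.
have [n hn] := pow_small hr2.
have [O0 [hO0 O00 hO0V]] := proj1 hnorm n.
case: htau => [[_ _ hscal _] _].
have O0s : O0 (0 *: y) by rewrite scale0r.
have [e0 [O [he0 hO Oy hOs]]] := hscal 0 y O0 I hO0 O0s.
have [m hm] := natbound a.
set m1 : R := (m.+1)%:R.
have hm1 : `|a| <= m1 by apply: (le_trans hm); rewrite ler_nat.
have hm10 : 0 <= m1 by rewrite ler0n.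
set M := m1 + 1.
have hM : 0 < M by rewrite ltr_wpDl.
exists (Num.min e0 1), (ball y (r / (2 * M))); split.
- by rewrite lt_min he0 ltr01.
- exact: ball_open.
- by apply: ball_center => //; rewrite divr_gt0 // mulr_gt0.
move=> b v hb [hv hdv]; rewrite lt_min in hb; case/andP: hb => hb0 hb1.
apply: h; first exact: Bscale.
have heq : a *: y - b *: v = a *: (y - v) + ((a - b) *: y + (b - a) *: (y - v)).
  rewrite [(b - a) *: _](_ : _ = - ((a - b) *: (y - v))); last by rewrite -scaleNr opprB.
  rewrite -scalerBr (_ : y - (y - v) = v); last by rewrite opprB addrC subrK.
  by rewrite scalerBl scalerBr addrA subrK.
have h1 : rh (a *: (y - v)) <= m1 * rh (y - v).
  by apply: (rho_big hW0 hWbal).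
have h2 : rh ((a - b) *: y) <= (2^-1) ^+ n.+1.
  apply: rhV; apply: hO0V; apply: hOs => //; rewrite subr0 distrC //.
have h3 : rh ((b - a) *: (y - v)) <= rh (y - v).
  by apply: (rho_scale hW0 hWbal); apply: ltW.
have h4 := rho_add hW0 (a *: (y - v)) ((a - b) *: y + (b - a) *: (y - v)).
have h5 := rho_add hW0 ((a - b) *: y) ((b - a) *: (y - v)).
have h6 := pow_dec R n.
have h7 : rh (y - v) * (2 * M) < r by rewrite -ltr_pdivlMr // mulr_gt0.
have -> : d (a *: y) (b *: v) = rh (a *: y - b *: v) by [].
rewrite heq; rewrite /M in h7.
have h8 : 0 <= rh (y - v) := d_ge0 y v.
nra.
Qed.

Lemma lin : linear_topology_on B T'.
Proof.
split.
- exact: topo.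
- exact: cont_add.
- exact: cont_scal.
- exact: hausd.
Qed.

Lemma rh_ball0 y : d 0 y = rh y.
Proof. by rewrite /d sub0r; apply: (rho_opp hW0 hWbal). Qed.

Lemma lsolid : locally_solid_on le B T'.
Proof.
split; first exact: lin.
move=> U [O [[hOB hO] O0 hOU]].
have [r [hr h]] := hO 0 O0.
have [n hn] := pow_small hr.
exists (V n `&` B); split.
- exists (ball 0 ((2^-1) ^+ n.+1)); split.
  + exact: ball_open.
  + by apply: ball_center; [apply: B0 | apply: pow_pos].
  + move=> y [hy hd]; split => //; apply: rhlt; by rewrite -rh_ball0.
- split; first by move=> y [].
  move=> a b [hb hbB] ha hab; split => //.
  by case: (hsolid n) => _ hs; apply: hs hb I hab.
- move=> y [hy hyB]; apply: hOU; apply: h => //.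
  rewrite rh_ball0; apply: (le_lt_trans (rhV hy)).
  exact: le_lt_trans (pow_dec R n) hn.
Qed.

Lemma metr : metrisable_on B T'.
Proof.
exists d; split; last by move=> U.
split.
- by move=> *; apply: d_ge0.
- move=> a b ha hb; split; first exact: d_eq0.
  by move=> ->; apply: d_refl.
- by move=> *; apply: d_sym.
- by move=> *; apply: d_tri.
Qed.

Lemma fin : finer (restrict_top B tau) T'.
Proof.
move=> U [hUB hU].
case: htau => [[[_ _ htU _] hadd _ _] _].
set F := [set O | tau O /\ O `&` B `<=` U].
exists (\bigcup_(O in F) O); split; first by apply: htU => O [].
apply/seteqP; split; last by move=> y [[O [_ hOB] Oy] hy]; apply: hOB.
move=> u hu; split; last exact: hUB.
have [r [hr h]] := hU u hu.
have [n hn] := pow_small hr.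
have [O0 [hO0 O00 hO0V]] := proj1 hnorm n.
have O0s : O0 (u + - u) by rewrite subrr.
have [O1 [O2 [hO1 hO2 O1u O2u hs]]] := hadd u (- u) O0 I I hO0 O0s.
exists O1 => //; split => // o [O1o hoB]; apply: h => //.
have hV : V n (o - u) by apply: hO0V; apply: hs.
have -> : d u o = rh (o - u) by rewrite /d -opprB; apply: (rho_opp hW0 hWbal).
apply: (le_lt_trans (rhV hV)); exact: le_lt_trans (pow_dec R n) hn.
Qed.

Lemma back_main : solidly_submetrisable_on le B (restrict_top B tau).
Proof. by exists T'; split; [apply: lsolid | apply: metr | apply: fin]. Qed.

End Back.



Lemma forward (R : realType) (E : lmodType R) (le : E -> E -> Prop)
  (hVL : is_vector_lattice le) (tau : set (set E)) (htau : locally_solid_on le setT tau)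
  (hL : locally_solidly_submetrisable le tau) (x : E) : carrier le tau x.
Proof.
set B := band_gen le x.
have [T' [hls' [d [[hd0 hdeq hdsym hdtri] hiff]] hfin]] := hL x.
have B0 : B 0 by move=> B' [[h0 _ _ _] _] _.
set Bn := fun n => [set y | B y /\ d 0 y < (2^-1 : R) ^+ n].
have hBn : forall n, T' (Bn n).
  move=> n; apply/hiff; split; first by move=> y [].
  move=> y [hy hdy]; exists ((2^-1) ^+ n - d 0 y); split; first by rewrite subr_gt0.
  move=> z hz hyz; split => //.
  by apply: (le_lt_trans (hdtri 0 y z B0 hy hz)); rewrite -ltrBrDl.
have hU : forall n, exists U, tau U /\ Bn n = U `&` B by move=> n; apply: hfin; apply: hBn.
have [Uf hUf] := choice hU.
case: htau => [[[_ htT _ htI] hadd _ _] hls].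
have hUf0 : forall n, Uf n 0.
  move=> n; have : Bn n 0.
    by split => //; rewrite (proj2 (hdeq 0 0 B0 B0) erefl); apply: pow_pos.
  by rewrite (proj2 (hUf n)) => -[].
have step : forall p : set E * nat, exists S', nbhd0 tau p.1 ->
    [/\ nbhd0 tau S', solid_in le setT S', S' `<=` Uf p.2 &
        forall a b, S' a -> S' b -> p.1 (a + b)].
  move=> [S n] /=; case: (pselect (nbhd0 tau S)) => hS; last by exists setT.
  have [O [hO O0 hOS]] := hS.
  have O00 : O (0 + 0) by rewrite addr0.
  have [O1 [O2 [hO1 hO2 O10 O20 hs]]] := hadd 0 0 O I I hO O00.
  set O3 := O1 `&` O2 `&` Uf n.
  have hO3 : tau O3 by apply: (htI); [apply: (htI) | apply: (proj1 (hUf n))].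
  have [S' [hS' hsol hsub]] := hls O3 (ex_intro _ O3 (And3 hO3 (conj (conj O10 O20) (hUf0 n)) (fun _ h => h))).
  exists S' => _; split => //.
    by move=> y /hsub [].
  move=> a b ha hb; apply: hOS; apply: hs.
    by have [[]] := hsub a ha.
  by have [[]] := hsub b hb.
have [f hf] := choice step.
pose Vs := fix g (n : nat) : set E := if n is n'.+1 then f (g n', n) else f (setT, 0%N).
have hT : nbhd0 tau setT by exists setT; split.
have hinv : forall n, nbhd0 tau (Vs n).
  elim=> [|n ih]; first by case: (hf (setT, 0%N) hT).
  by case: (hf (Vs n, n.+1) ih).
have hVsf : forall n, solid_in le setT (Vs n) /\ Vs n `<=` Uf n.
  case=> [|n]; first by case: (hf (setT, 0%N) hT).
  by case: (hf (Vs n, n.+1) (hinv n)).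
exists Vs; split.
- split; first exact: hinv.
  by move=> n a b ha hb; case: (hf (Vs n, n.+1) (hinv n)) => _ _ _; apply.
- by move=> n; case: (hVsf n).
move=> y hy.
set z := vmeet le (vabs le x) (vabs le y).
have hz0 : le 0 z by apply: (meet_ge0 hVL); apply: abs_ge0.
have hzabs : le (vabs le z) z by apply: abs_le_nonneg.
have hzy : forall n, Vs n z.
  move=> n; case: (hVsf n) => [[_ hs] _]; apply: hs (hy n I) I _.
  by apply: (ltr hVL hzabs); rewrite /z; apply: (meet_r hVL).
have hzB : B z.
  move=> B' [[_ _ _ [_ hs]] _] hx; apply: hs hx I _.
  by apply: (ltr hVL hzabs); rewrite /z; apply: (meet_l hVL).
have hzBn : forall n, Bn n z.
  by move=> n; rewrite (proj2 (hUf n)); split => //; apply: (proj2 (hVsf n)).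
have hdz : d 0 z = 0.
  apply/eqP; rewrite eq_le hd0 // andbT; rewrite leNgt; apply/negP => hpos.
  have [n hn] := pow_small hpos.
  by case: (hzBn n) => _ h; move: (lt_trans h hn); rewrite ltxx.
by have := proj1 (hdeq 0 z B0 hzB) hdz.
Qed.

Theorem proposition3p7 (R : realType) (E : lmodType R) (le : E -> E -> Prop)
  (hVL : is_vector_lattice le) (hArch : is_archimedean le)
  (tau : set (set E)) (htau : locally_solid_on le setT tau) :
  locally_solidly_submetrisable le tau <-> carrier le tau = setT.
Proof.
split=> [hL | hC].
  by apply/seteqP; split => // x _; apply: forward.
move=> x; have : carrier le tau x by rewrite hC.
case=> V [hn hs hd].
exact (back_main hVL htau hn hs hd).
Qed.
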